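(* For any integers $k,l\geq 1$, the equation $$[[x_{k+1},\dots,x_{k+l}],[x_1,\dots,x_k]]=\beta_{k+l}({\sf Sum}(\Phi_{k,l}C_{l,k}))$$ holds in $\mathbb Z\langle x_1,\dots,x_{k+l}\rangle$, where $\Phi_{k,l}C_{l,k}=\{\Phi_{k,l}\circ\tau\mid\tau\in C_{l,k}\}$.
   Context: $\mathbb Z\langle x_1,\dots,x_m\rangle$ is the free associative ring on $x_1,\dots,x_m$, with bracket $[u,v]=uv-vu$ and left-normed brackets $[u_1,\dots,u_r]=[[u_1,\dots,u_{r-1}],u_r]$. $S_m$ is the symmetric group on $\{1,\dots,m\}$. $\gamma_m$ is the additive subgroup spanned by the monomials $x_{\sigma(1)}\cdots x_{\sigma(m)}$, $\sigma\in S_m$; $\beta_m:\gamma_m\to\gamma_m$ is the homomorphism with $\beta_m(x_{\sigma(1)}\cdots x_{\sigma(m)})=[x_{\sigma(1)},\dots,x_{\sigma(m)}]$; for $T\subseteq S_m$, ${\sf Sum}(T)=\sum_{\sigma\in T}x_{\sigma(1)}\cdots x_{\sigma(m)}$. An $(s,t)$-shuffle is a pair $(\alpha,\beta)$ of strictly increasing maps $\alpha:\{1,\dots,s\}\to\{1,\dots,s+t\}$, $\beta:\{1,\dots,t\}\to\{1,\dots,s+t\}$ with disjoint images; ${\sf Sh}^1(s,t)$ is the set of those with $\alpha(1)=1$. For $p,q\geq1$, $0\leq i\leq q-1$ and $(\alpha,\beta)\in{\sf Sh}^1(q-i,i)$, let $\tilde\sigma_{\alpha,\beta,p,q}\in S_{p+q}$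 be given by $\tilde\sigma(j)=j$ for $1\leq j\leq p$, $\tilde\sigma(p+j)=p+\beta(i+1-j)$ for $1\leq j\leq i$, $\tilde\sigma(p+i+j)=p+\alpha(j)$ for $1\leq j\leq q-i$; let $\sigma_{\alpha,\beta,p,q}=\tilde\sigma_{\alpha,\beta,p,q}\circ(1,2)^i$. Set $C_{p,q}=\{\sigma_{\alpha,\beta,p,q}\mid 0\leq i\leq q-1,\ (\alpha,\beta)\in{\sf Sh}^1(q-i,i)\}\subseteq S_{p+q}$. Finally $\Phi_{k,l}\in S_{k+l}$ is defined by $\Phi_{k,l}(i)=i+k$ if $i\leq l$ and $\Phi_{k,l}(i)=i-l$ if $i>l$. *)

(* Defs.v *)
From mathcomp Require Import all_boot all_order all_algebra.
Unset Printing Implicit Defensive.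
Import GRing.Theory.
Local Open Scope ring_scope.

(* ---------- The free associative ring Z<x_1,x_2,...> ----------
   An element is represented as a formal finite Z-linear combination of
   words (a word is a seq nat of letter indices, letter i standing for x_i,
   1-based).  Two representatives denote the same element iff all their
   coefficients agree (nc_eq). *)
Definition ncpoly := seq (int * seq nat).

Definition nc_coef (p : ncpoly) (w : seq nat) : int :=
  \sum_(cw <- p | cw.2 == w) cw.1.

Definition nc_eq (p q : ncpoly) : Prop := forall w, nc_coef p w = nc_coef q w.

Definition nc_zero : ncpoly := [::].
Definition nc_add (p q : ncpoly) : ncpoly := p ++ q.
Definition nc_scale (c : int) (p : ncpoly) : ncpoly :=
  [seq (c * cw.1, cw.2) | cw <- p].
Definition nc_opp (p : ncpoly) : ncpoly := nc_scale (-1) p.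
Definition nc_mul (p q : ncpoly) : ncpoly :=
  [seq (a.1 * b.1, a.2 ++ b.2) | a <- p, b <- q].

Definition nc_x (i : nat) : ncpoly := [:: (1, [:: i])].

Definition nc_br (u v : ncpoly) : ncpoly := nc_add (nc_mul u v) (nc_opp (nc_mul v u)).

Definition nc_lbr (us : seq ncpoly) : ncpoly :=
  if us is u :: us' then foldl nc_br u us' else nc_zero.

Definition nc_beta (p : ncpoly) : ncpoly :=
  foldr nc_add nc_zero [seq nc_scale cw.1 (nc_lbr (map nc_x cw.2)) | cw <- p].

(* ---------- Permutations as words ----------
   A permutation sigma of {1..m} is recorded by its word
   [sigma(1); ...; sigma(m)].  A set T of permutations is a duplicate-free
   list of such words; Sum(T) = sum of the monomials x_{sigma(1)}...x_{sigma(m)}. *)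
Definition perm_word (m : nat) (s : nat -> nat) : seq nat := [seq s j | j <- iota 1 m].

Definition Sum (T : seq (seq nat)) : ncpoly := [seq (1, w) | w <- undup T].

(* We encode the finite sets {1..n} by the ordinal types 'I_n (0-based):
   value v in 'I_n corresponds to v+1. *)
Definition shuffle_pred (s t : nat)
  (ab : {ffun 'I_s -> 'I_(s + t)} * {ffun 'I_t -> 'I_(s + t)}) : bool :=
  [&& [forall i : 'I_s, forall j : 'I_s, (i < j)%N ==> (ab.1 i < ab.1 j)%N],
      [forall i : 'I_t, forall j : 'I_t, (i < j)%N ==> (ab.2 i < ab.2 j)%N] &
      [forall i : 'I_s, forall j : 'I_t, ab.1 i != ab.2 j]].

Definition Sh1_pred (s t : nat)
  (ab : {ffun 'I_s -> 'I_(s + t)} * {ffun 'I_t -> 'I_(s + t)}) : bool :=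
  @shuffle_pred s t ab && [forall i : 'I_s, (val i == 0%N) ==> (val (ab.1 i) == 0%N)]
  && (0 < s)%N.

(* 1-based application of a finite function: app1 f j = f(j) for 1 <= j <= n *)
Definition app1 (n m : nat) (f : {ffun 'I_n -> 'I_m}) (j : nat) : nat :=
  nth 0%N [seq (nat_of_ord (f o)).+1 | o <- enum 'I_n] j.-1.

Definition sigma_tilde (p q i : nat)
  (ab : {ffun 'I_(q - i) -> 'I_(q - i + i)} * {ffun 'I_i -> 'I_(q - i + i)})
  (j : nat) : nat :=
  if (j <= p)%N then j
  else if (j <= p + i)%N then (p + @app1 _ _ ab.2 (i + 1 - (j - p)))%N
  else (p + @app1 _ _ ab.1 (j - p - i))%N.

Definition swap12 (j : nat) : nat :=
  if j == 1%N then 2%N else if j == 2%N then 1%N else j.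

Definition sigma_abpq (p q i : nat)
  (ab : {ffun 'I_(q - i) -> 'I_(q - i + i)} * {ffun 'I_i -> 'I_(q - i + i)})
  (j : nat) : nat :=
  sigma_tilde p q i ab (if odd i then swap12 j else j).

Definition C_set (p q : nat) : seq (seq nat) :=
  undup (flatten [seq [seq perm_word (p + q) (sigma_abpq p q i ab)
                      | ab <- enum [pred ab | @Sh1_pred (q - i) i ab]]
                 | i <- iota 0 q]).

Definition Phi (k l : nat) (j : nat) : nat := if (j <= l)%N then (j + k)%N else (j - l)%N.

(* Phi_{k,l} C_{l,k} = { Phi o tau | tau in C_{l,k} } : the word of
   Phi o tau is the image of the word of tau under Phi *)
Definition PhiC (k l : nat) : seq (seq nat) :=
  undup [seq map (Phi k l) w | w <- C_set l k].

(* Main.v *)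
Require Import Defs.
From mathcomp Require Import all_boot all_order all_algebra.
From mathcomp Require Import ring zify.
Import GRing.Theory.
Notation cf := nc_coef.

Section Alg.
Local Open Scope ring_scope.

Lemma cf_add p q w : cf (nc_add p q) w = cf p w + cf q w.
Proof. by rewrite /nc_coef /nc_add big_cat. Qed.

Lemma cf_nil w : cf [::] w = 0.
Proof. by rewrite /nc_coef big_nil. Qed.

Lemma cf_scale c p w : cf (nc_scale c p) w = c * cf p w.
Proof. by rewrite /nc_coef /nc_scale big_map /= mulr_sumr. Qed.

Lemma cf_opp p w : cf (nc_opp p) w = - cf p w.
Proof. by rewrite /nc_opp cf_scale mulN1r. Qed.

Lemma cf_mul_pairs p q w : cf (nc_mul p q) w =
  \sum_(a <- p) \sum_(b <- q) (if a.2 ++ b.2 == w then a.1 * b.1 else 0).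
Proof.
rewrite /nc_coef /nc_mul big_mkcond /=.
by rewrite big_allpairs_dep.
Qed.

Lemma sum_split (x y w : seq nat) (c : int) :
  \sum_(i < (size w).+1) (if (x == take i w) && (y == drop i w) then c else 0)
  = if x ++ y == w then c else 0.
Proof.
case: eqP => [<-|E].
  have hx : (size x < (size (x ++ y)).+1)%N by rewrite size_cat; lia.
  rewrite (bigD1 (Ordinal hx)) //= take_size_cat // drop_size_cat // !eqxx.
  rewrite big1 ?addr0 // => i /negbTE ne.
  case: eqP => // ex; case: eqP => // ey.
  exfalso; move: ne; rewrite -(inj_eq val_inj) /=.
  have: size x = size (take i (x ++ y)) by rewrite -ex.
  rewrite size_take; case: ltnP => [_ ->|]; first by rewrite eqxx.
  move=> h1 h2; have := ltn_ord i; rewrite h2 in h1 *; lia.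
rewrite big1 // => i _; case: eqP => // ex; case: eqP => // ey.
by exfalso; apply: E; rewrite ex ey cat_take_drop.
Qed.

Lemma cf_mul p q w : cf (nc_mul p q) w =
  \sum_(i < (size w).+1) cf p (take i w) * cf q (drop i w).
Proof.
rewrite cf_mul_pairs /nc_coef.
under [RHS]eq_bigr => i _ do rewrite !big_mkcond /= big_distrl /=.
under [RHS]eq_bigr => i _ do under eq_bigr => a _ do rewrite big_distrr /= big_mkcond /=.
rewrite [RHS]exchange_big /=; apply: eq_bigr => a _.
rewrite [RHS]exchange_big /=; apply: eq_bigr => b _.
rewrite -sum_split; apply: eq_bigr => i _.
by case: eqP; case: eqP => //= _ _; rewrite ?mulr0 ?mul0r.
Qed.

Lemma cf_mulA p q r w : cf (nc_mul (nc_mul p q) r) w = cf (nc_mul p (nc_mul q r)) w.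
Proof.
rewrite !cf_mul_pairs /nc_mul big_allpairs_dep /=.
apply: eq_bigr => a _; rewrite big_allpairs_dep /=.
apply: eq_bigr => b _; apply: eq_bigr => c _.
by rewrite catA mulrA.
Qed.

Lemma cf_mul_addl p q r w : cf (nc_mul (nc_add p q) r) w = cf (nc_mul p r) w + cf (nc_mul q r) w.
Proof. rewrite !cf_mul -big_split; apply: eq_bigr => i _; by rewrite cf_add mulrDl. Qed.
Lemma cf_mul_addr p q r w : cf (nc_mul r (nc_add p q)) w = cf (nc_mul r p) w + cf (nc_mul r q) w.
Proof. rewrite !cf_mul -big_split; apply: eq_bigr => i _; by rewrite cf_add mulrDr. Qed.
Lemma cf_mul_oppl p r w : cf (nc_mul (nc_opp p) r) w = - cf (nc_mul p r) w.
Proof. rewrite !cf_mul -sumrN; apply: eq_bigr => i _; by rewrite cf_opp mulNr. Qed.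
Lemma cf_mul_oppr p r w : cf (nc_mul r (nc_opp p)) w = - cf (nc_mul r p) w.
Proof. rewrite !cf_mul -sumrN; apply: eq_bigr => i _; by rewrite cf_opp mulrN. Qed.

Lemma cf_br u v w : cf (nc_br u v) w = cf (nc_mul u v) w - cf (nc_mul v u) w.
Proof. by rewrite /nc_br cf_add cf_opp. Qed.

Lemma jacobi u a b w :
  cf (nc_br u (nc_br a b)) w = cf (nc_br (nc_br u a) b) w - cf (nc_br (nc_br u b) a) w.
Proof.
rewrite !cf_br /nc_br.
rewrite !(cf_mul_addl, cf_mul_addr, cf_mul_oppl, cf_mul_oppr) !cf_mulA.
ring.
Qed.

Lemma cf_mul_linl (T : Type) (J : seq T) (c : T -> int) (P : T -> ncpoly) p a :
  (forall w, cf p w = \sum_(j <- J) c j * cf (P j) w) ->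
  forall w, cf (nc_mul p a) w = \sum_(j <- J) c j * cf (nc_mul (P j) a) w.
Proof.
move=> H w; rewrite cf_mul.
under eq_bigr => i _ do rewrite H big_distrl /=.
rewrite exchange_big /=; apply: eq_bigr => j _.
by rewrite cf_mul mulr_sumr; apply: eq_bigr => i _; rewrite mulrA.
Qed.

Lemma cf_mul_linr (T : Type) (J : seq T) (c : T -> int) (P : T -> ncpoly) p a :
  (forall w, cf p w = \sum_(j <- J) c j * cf (P j) w) ->
  forall w, cf (nc_mul a p) w = \sum_(j <- J) c j * cf (nc_mul a (P j)) w.
Proof.
move=> H w; rewrite cf_mul.
under eq_bigr => i _ do rewrite H big_distrr /=.
rewrite exchange_big /=; apply: eq_bigr => j _.
by rewrite cf_mul mulr_sumr; apply: eq_bigr => i _; rewrite mulrCA.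
Qed.

Lemma cf_br_linl (T : Type) (J : seq T) (c : T -> int) (P : T -> ncpoly) p a :
  (forall w, cf p w = \sum_(j <- J) c j * cf (P j) w) ->
  forall w, cf (nc_br p a) w = \sum_(j <- J) c j * cf (nc_br (P j) a) w.
Proof.
move=> H w; rewrite cf_br (@cf_mul_linl _ _ _ _ _ a H) (@cf_mul_linr _ _ _ _ _ a H) -sumrB.
by apply: eq_bigr => j _; rewrite cf_br mulrBr.
Qed.

Lemma cf_foldl_lin (T : Type) (J : seq T) (c : T -> int) (r : seq ncpoly) :
  forall (P : T -> ncpoly) p,
  (forall w, cf p w = \sum_(j <- J) c j * cf (P j) w) ->
  forall w, cf (foldl nc_br p r) w = \sum_(j <- J) c j * cf (foldl nc_br (P j) r) w.
Proof.
elim: r => [|a r IH] P p H //=.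
apply: (IH (fun j => nc_br (P j) a)); exact: cf_br_linl.
Qed.

Fixpoint vm (n : nat) : seq bitseq :=
  if n is n'.+1 then [seq rcons m false | m <- vm n'] ++ [seq rcons m true | m <- vm n']
  else [:: [:: false]].

Definition Gw (n : nat) (m : bitseq) : seq nat :=
  rev (mask m (iota 1 n.+1)) ++ mask (map negb m) (iota 1 n.+1).

Definition sgn (m : bitseq) : int := (-1) ^+ count id m.

Lemma size_vm n m : m \in vm n -> size m = n.+1.
Proof.
elim: n m => [|n IH] m /=; first by rewrite inE => /eqP ->.
by rewrite mem_cat => /orP[] /mapP[m' /IH h ->]; rewrite size_rcons h.
Qed.

Lemma iota_rcons n : iota 1 n.+1 = rcons (iota 1 n) n.+1.
Proof. by rewrite -cats1 -[in LHS](addn1 n) iotaD add1n. Qed.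

Lemma Gw_false n m : size m = n.+1 -> Gw n.+1 (rcons m false) = rcons (Gw n m) n.+2.
Proof.
move=> hm; rewrite /Gw (iota_rcons n.+1) map_rcons !mask_rcons ?size_map ?size_iota //=.
by rewrite cats0 rcons_cat cats1.
Qed.

Lemma Gw_true n m : size m = n.+1 -> Gw n.+1 (rcons m true) = n.+2 :: Gw n m.
Proof.
move=> hm; rewrite /Gw (iota_rcons n.+1) map_rcons !mask_rcons ?size_map ?size_iota //=.
by rewrite cats0 cats1 rev_rcons.
Qed.

Lemma sgn_rcons m b : sgn (rcons m b) = (if b then -1 else 1) * sgn m.
Proof.
rewrite /sgn -cats1 count_cat /= addn0 exprD mulrC.
by case: b; rewrite ?expr1 ?expr0.
Qed.

Lemma claim n : forall u w,
  cf (nc_br u (nc_lbr (map nc_x (iota 1 n.+1)))) w =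
  \sum_(m <- vm n) sgn m * cf (foldl nc_br u (map nc_x (Gw n m))) w.
Proof.
elim: n => [|n IH] u w.
  by rewrite /= big_cons big_nil /Gw /= /sgn /= expr0 mul1r addr0.
rewrite (iota_rcons n.+1) map_rcons.
have -> : nc_lbr (rcons [seq nc_x i | i <- iota 1 n.+1] (nc_x n.+2)) =
  nc_br (nc_lbr [seq nc_x i | i <- iota 1 n.+1]) (nc_x n.+2).
  by rewrite /= foldl_rcons.
rewrite jacobi (@cf_br_linl _ _ _ _ _ _ (IH u)) IH /= big_cat !big_map /=.
rewrite -sumrN; congr (_ + _); rewrite big_seq_cond [RHS]big_seq_cond;
  apply: eq_bigr => m /andP[/size_vm hm _].
  by rewrite Gw_false // sgn_rcons mul1r map_rcons foldl_rcons.
by rewrite Gw_true // sgn_rcons mulN1r mulNr.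
Qed.

End Alg.

Definition sw (s : seq nat) : seq nat :=
  if s is a :: b :: r then b :: a :: r else s.
Definition swp (b : bool) (s : seq nat) := if b then sw s else s.

Definition Vl {n m : nat} (f : {ffun 'I_n -> 'I_m}) : seq nat := [seq val (f o) | o <- enum 'I_n].

Lemma size_Vl n m (f : {ffun 'I_n -> 'I_m}) : size (Vl f) = n.
Proof. by rewrite size_map size_enum_ord. Qed.

Lemma app1E n m (f : {ffun 'I_n -> 'I_m}) t : (0 < t <= n)%N ->
  @app1 _ _ f t = (nth 0 (Vl f) t.-1).+1.
Proof.
move=> ht; rewrite /app1 /Vl.
have -> : [seq (nat_of_ord (f o)).+1 | o <- enum 'I_n] = map succn [seq val (f o) | o <- enum 'I_n].
  by rewrite -map_comp.
by rewrite (nth_map 0) // size_map size_enum_ord; lia.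
Qed.

Lemma map_swap12 (f : nat -> nat) N : (2 <= N)%N ->
  [seq f (swap12 j) | j <- iota 1 N] = sw [seq f j | j <- iota 1 N].
Proof.
case: N => [|[|N]] //= _; congr (_ :: _ :: _). apply/eq_in_map => j.
rewrite mem_iota => /andP[h _]; rewrite /swap12.
case: eqP => [e|_]; first by rewrite e in h.
case: eqP => [e|_] //; by rewrite e in h.
Qed.

Lemma map_sw (f : nat -> nat) s : map f (sw s) = sw (map f s).
Proof. by case: s => [|a [|b r]]. Qed.

Lemma rev_mkseq (s : seq nat) :
  rev s = [seq nth 0 s (size s - t.+1) | t <- iota 0 (size s)].
Proof.
rewrite -{1}(mkseq_nth 0 (rev s)) size_rev /mkseq; apply/eq_in_map => t.
by rewrite mem_iota => /andP[_ h]; rewrite nth_rev.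
Qed.

Lemma iota_shift a n : iota a n = map (addn a) (iota 0 n).
Proof. by rewrite -iotaDl addn0. Qed.

Lemma word_lemma k l i
  (ab : {ffun 'I_(k - i) -> 'I_(k - i + i)} * {ffun 'I_i -> 'I_(k - i + i)}) :
  (1 <= l)%N -> (i < k)%N ->
  map (Phi k l) (perm_word (l + k) (sigma_abpq l k i ab)) =
  swp (odd i) (iota k.+1 l ++ map succn (rev (Vl ab.2) ++ Vl ab.1)).
Proof.
move=> hl hik.
rewrite /perm_word /sigma_abpq.
have -> : [seq sigma_tilde l k i ab (if odd i then swap12 j else j) | j <- iota 1 (l + k)]
  = swp (odd i) [seq sigma_tilde l k i ab j | j <- iota 1 (l + k)].
  case: (odd i) => //=; rewrite (map_swap12 (sigma_tilde l k i ab)) //; lia.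
have -> : forall b s, map (Phi k l) (swp b s) = swp b (map (Phi k l) s).
  by move=> [] s //=; rewrite map_sw.
congr swp.
have -> : (l + k = l + (i + (k - i)))%N by lia.
rewrite iotaD iotaD !map_cat; congr (_ ++ _).
  rewrite -[k.+1](addn1 k) iotaDl -map_comp; apply/eq_in_map => j.
  rewrite mem_iota => /andP[h1 h2] /=.
  have hj : (j <= l)%N by lia.
  by rewrite /sigma_tilde hj /Phi hj addnC.
congr (_ ++ _).
  rewrite map_rev rev_mkseq size_map size_Vl -map_comp (iota_shift (1 + l)) -map_comp -map_comp.
  apply/eq_in_map => t; rewrite mem_iota => /andP[_ ht] /=.
  rewrite /sigma_tilde.
  have -> : (1 + l + t <= l = false)%N by lia.
  have -> : (1 + l + t <= l + i)%N by lia.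
  rewrite app1E ?(nth_map 0) ?size_Vl; try lia.
  rewrite /Phi.
  have -> : (l + (nth 0 (Vl ab.2) (i + 1 - (1 + l + t - l)).-1).+1 <= l = false)%N by lia.
  have -> : ((i + 1 - (1 + l + t - l)).-1 = i - t.+1)%N by lia.
  rewrite (_ : [seq (succn \o _) i0 | i0 <- enum 'I_i] = map succn (Vl ab.2)); last by rewrite /Vl -map_comp.
  rewrite (nth_map 0) ?size_Vl; lia.
rewrite -{1}(mkseq_nth 0 (Vl ab.1)) size_Vl /mkseq -map_comp (iota_shift (1 + l + i)) -map_comp -map_comp.
apply/eq_in_map => t; rewrite mem_iota => /andP[_ ht] /=.
rewrite /sigma_tilde.
have -> : (1 + l + i + t <= l = false)%N by lia.
have -> : (1 + l + i + t <= l + i = false)%N by lia.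
rewrite app1E ?size_Vl; try lia.
rewrite /Phi.
have -> : (l + (nth 0 (Vl ab.1) (1 + l + i + t - l - i).-1).+1 <= l = false)%N by lia.
have -> : ((1 + l + i + t - l - i).-1 = t)%N by lia.
lia.
Qed.

Lemma mem_map_rcons (s : seq bitseq) m b c :
  (rcons m b \in [seq rcons x c | x <- s]) = (b == c) && (m \in s).
Proof.
apply/mapP/andP => [[x hx /rcons_inj [-> ->]]|[/eqP -> h]]; last by exists m.
by split.
Qed.

Lemma mem_vm n m : (m \in vm n) = (size m == n.+1) && (nth true m 0 == false).
Proof.
elim: n m => [|n IH] m.
  by case: m => [|b [|c r]] //=; rewrite inE //; case: b.
case/lastP: m => [|m b].
  apply/negbTE/negP; rewrite mem_cat => /orP [] /mapP [x _] /(congr1 size); by rewrite size_rcons.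
rewrite mem_cat !mem_map_rcons IH size_rcons eqSS nth_rcons.
case: (ltnP 0 (size m)) => h; last by rewrite (_ : size m = 0)%N //; lia.
by case: b; rewrite /= ?orbF.
Qed.

Lemma uniq_vm n : uniq (vm n).
Proof.
elim: n => [|n IH] //=.
rewrite cat_uniq !map_inj_uniq ?IH //; try exact: rcons_injl.
rewrite andbT; apply/hasPn => x /mapP [y _ ->].
apply/negP => /mapP [z _] /rcons_inj [] //.
Qed.

Lemma mask_mem_map (s : seq nat) m : uniq s -> size m = size s ->
  [seq x \in mask m s | x <- s] = m.
Proof.
elim: s m => [|x s IH] [|b m] //= /andP [hx us] [hm].
have nx : x \in mask m s = false by apply/negP => /mem_mask; rewrite (negbTE hx).
congr (_ :: _).
  by case: b; rewrite ?inE ?eqxx ?nx.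
rewrite -[RHS](IH m us hm); apply/eq_in_map => y hy.
case: b => //; rewrite inE; case: eqP => // e; by rewrite -e hy in hx.
Qed.

Lemma mask_inj (s : seq nat) m1 m2 : uniq s -> size m1 = size s -> size m2 = size s ->
  mask m1 s = mask m2 s -> m1 = m2.
Proof.
by move=> us h1 h2 e; rewrite -(@mask_mem_map s m1 us h1) -(@mask_mem_map s m2 us h2) e.
Qed.

Lemma vm_cons n m : m \in vm n -> exists m', m = false :: m' /\ size m' = n.
Proof.
rewrite mem_vm => /andP [/eqP hs /eqP h0].
case: m hs h0 => [|b m'] //= [hs] ->; by exists m'.
Qed.

Lemma Gw_cons n m' : Gw n (false :: m') =
  rev (mask m' (iota 2 n)) ++ 1%N :: mask (map negb m') (iota 2 n).
Proof. by []. Qed.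

Lemma Gw_inj n : {in vm n &, injective (Gw n)}.
Proof.
move=> m1 m2 /vm_cons [a1 [-> h1]] /vm_cons [a2 [-> h2]].
rewrite !Gw_cons => e.
have nin a : (1 \in rev (mask a (iota 2 n))) = false.
  by apply/negP; rewrite mem_rev => /mem_mask; rewrite mem_iota.
have hi := congr1 (index 1%N) e.
rewrite !index_cat !nin /= !addn0 !size_rev in hi.
have := congr1 (take (size (mask a1 (iota 2 n)))) e.
rewrite take_size_cat ?size_rev // hi take_size_cat ?size_rev // => /(congr1 rev).
rewrite !revK => /mask_inj -> //; rewrite ?iota_uniq ?size_iota //.
Qed.

Lemma sw_inv s : sw (sw s) = s.
Proof. by case: s => [|a [|b r]]. Qed.

Definition Wd (k l n : nat) (m : bitseq) : seq nat :=
  swp (odd (count id m)) (iota k.+1 l ++ Gw n m).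

Lemma mem_Gw n m x : x \in Gw n m -> (1 <= x <= n.+1)%N.
Proof.
rewrite mem_cat mem_rev => /orP [] /mem_mask; rewrite mem_iota; lia.
Qed.

Lemma Wd_inj n l : (1 <= l)%N -> {in vm n &, injective (Wd n.+1 l n)}.
Proof.
move=> hl m1 m2 h1 h2; rewrite /Wd.
have key : forall a b, a \in vm n -> b \in vm n -> ~~ odd (count id a) -> odd (count id b) ->
    iota n.+2 l ++ Gw n a <> sw (iota n.+2 l ++ Gw n b).
  move=> a b _ hb _ _.
  case: l hl => [|[|l']] // _ /=.
    move/vm_cons: hb => [b' [-> _]]; rewrite Gw_cons.
    case E: (rev (mask b' (iota 2 n))) => [|y r] /= [] //.
    move=> hy; have : y \in rev (mask b' (iota 2 n)) by rewrite E inE eqxx.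
    by rewrite mem_rev => /mem_mask; rewrite mem_iota hy; lia.
  by move=> [] /eqP; lia.
case o1: (odd _); case o2: (odd _) => //= e.
- have := congr1 sw e; rewrite !sw_inv => /(congr1 (drop l)).
  by rewrite !drop_size_cat ?size_iota // => /Gw_inj; apply.
- by exfalso; apply: (key m2 m1 h2 h1); rewrite ?o1 ?o2.
- by exfalso; apply: (key m1 m2 h1 h2); rewrite ?o1 ?o2.
- by move: e => /(congr1 (drop l)); rewrite !drop_size_cat ?size_iota // => /Gw_inj; apply.
Qed.

Lemma iota1S k : iota 1 k = map succn (iota 0 k).
Proof. by rewrite (iota_shift 1). Qed.

Lemma sorted_Vl N M (f : {ffun 'I_N -> 'I_M}) :
  [forall i : 'I_N, forall j : 'I_N, (i < j)%N ==> (f i < f j)%N] -> sorted ltn (Vl f).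
Proof.
move=> h; rewrite /Vl sorted_map.
apply: (@sub_sorted _ (relpre val ltn)); last by rewrite -sorted_map val_enum_ord iota_ltn_sorted.
move=> o1 o2 /= lt; by move/forallP: h => /(_ o1)/forallP/(_ o2)/implyP; apply.
Qed.

Lemma Vl_bound N M (f : {ffun 'I_N -> 'I_M}) x : x \in Vl f -> (x < M)%N.
Proof. by rewrite /Vl => /mapP [o _ ->]; apply: ltn_ord. Qed.

Lemma shuffle_to_mask n i
  (ab : {ffun 'I_(n.+1 - i) -> 'I_(n.+1 - i + i)} * {ffun 'I_i -> 'I_(n.+1 - i + i)}) :
  (i < n.+1)%N -> Sh1_pred (n.+1 - i) i ab ->
  exists2 m, m \in vm n & (count id m = i /\ map succn (rev (Vl ab.2) ++ Vl ab.1) = Gw n m).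
Proof.
set k := n.+1 => hik /andP [/andP [hsh h0] hpos]; move: hsh => /and3P [hA hB hAB].
set A := Vl ab.1; set B := Vl ab.2.
have sA : sorted ltn A by apply: sorted_Vl.
have sB : sorted ltn B by apply: sorted_Vl.
have bA x : x \in A -> (x < k)%N by move/Vl_bound; lia.
have bB x : x \in B -> (x < k)%N by move/Vl_bound; lia.
have dAB x : x \in A -> x \in B -> False.
  move=> /mapP [o1 _ ->] /mapP [o2 _ /val_inj e].
  by move/forallP: hAB => /(_ o1)/forallP/(_ o2); rewrite e eqxx.
have zA : 0%N \in A.
  pose o0 := Ordinal hpos.
  move/forallP: h0 => /(_ o0) /implyP /(_ isT) /eqP <-.
  by apply: map_f; rewrite mem_enum.
have szA : size A = (k - i)%N by rewrite size_Vl.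
have szB : size B = i by rewrite size_Vl.
have cover : A ++ B =i iota 0 k.
  apply: (uniq_min_size _ _ _).2.
  - rewrite cat_uniq !(sorted_uniq ltn_trans ltnn) //= andbT.
    by apply/hasPn => x hx; apply/negP => hx'; apply: (dAB x).
  - by move=> x; rewrite mem_cat mem_iota => /orP [/bA|/bB]; lia.
  - by rewrite size_iota size_cat szA szB; lia.
pose m := [seq x \in B | x <- iota 0 k].
have hmB : mask m (iota 0 k) = B.
  rewrite -filter_mask; apply: (irr_sorted_eq ltn_trans ltnn).
  - by apply: sorted_filter; [exact: ltn_trans | exact: iota_ltn_sorted].
  - exact: sB.
  move=> x; rewrite mem_filter mem_iota /=; apply/andP/idP => [[] //|hx].
  by split=> //; have := bB x hx; lia.
have hmA : mask (map negb m) (iota 0 k) = A.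
  rewrite -map_comp -filter_mask; apply: (irr_sorted_eq ltn_trans ltnn).
  - by apply: sorted_filter; [exact: ltn_trans | exact: iota_ltn_sorted].
  - exact: sA.
  move=> x; rewrite mem_filter /=; apply/andP/idP => [[hx hi]|hx].
    by move: hi; rewrite -cover mem_cat (negbTE hx) orbF.
  split; last by rewrite -cover mem_cat hx.
  by apply/negP => /(dAB x hx).
have szm : size m = k by rewrite size_map size_iota.
exists m.
  rewrite mem_vm szm eqxx /m (nth_map 0) ?size_iota // nth_iota //=.
  by apply/eqP/negbTE/negP => /(dAB 0%N zA).
split.
  by rewrite -(size_mask (s := iota 0 k)) ?hmB ?size_iota.
rewrite /Gw -/k iota1S -!map_mask hmA hmB map_cat map_rev.
by [].
Qed.

Lemma mask_disj (s : seq nat) m x : uniq s -> size m = size s ->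
  x \in mask m s -> x \in mask (map negb m) s -> False.
Proof.
move=> us hm h1 h2.
have xs : x \in s by apply: mem_mask h1.
have e1 := @mask_mem_map s m us hm.
have e2 := @mask_mem_map s (map negb m) us (etrans (size_map _ _) hm).
have hj : (index x s < size s)%N by rewrite index_mem.
have := congr1 (fun t => nth false t (index x s)) e1.
have := congr1 (fun t => nth false t (index x s)) e2.
rewrite /= !(nth_map 0) // nth_index // h1 h2 (nth_map false) ?hm //.
by case: (nth false m (index x s)).
Qed.

Lemma mask_to_shuffle n m : m \in vm n ->
  exists ab : {ffun 'I_(n.+1 - count id m) -> 'I_(n.+1 - count id m + count id m)} *
              {ffun 'I_(count id m) -> 'I_(n.+1 - count id m + count id m)},
  [/\ (count id m < n.+1)%N, Sh1_pred (n.+1 - count id m) (count id m) ab &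
      map succn (rev (Vl ab.2) ++ Vl ab.1) = Gw n m].
Proof.
move=> hm; have hsz := @size_vm n m hm.
have [m' [em hm']] := @vm_cons n m hm.
set k := n.+1; set i := count id m.
have hik : (i < k)%N by rewrite /i em /=; have := count_size id m'; lia.
set B := mask m (iota 0 k); set A := mask (map negb m) (iota 0 k).
have szB : size B = i by rewrite size_mask ?size_iota.
have szA : size A = (k - i)%N.
  rewrite size_mask ?size_map ?size_iota // count_map.
  have h := count_predC id m.
  have h' : count (preim negb id) m = count (predC id) m by apply: eq_count.
  rewrite h' /k /i; lia.
have bA x : x \in A -> (x < k - i + i)%N by move/mem_mask; rewrite mem_iota; lia.
have bB x : x \in B -> (x < k - i + i)%N by move/mem_mask; rewrite mem_iota; lia.
have hk : (0 < k - i + i)%N by lia.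
pose d : 'I_(k - i + i) := Ordinal hk.
pose f1 := [ffun o : 'I_(k - i) => insubd d (nth 0 A o)].
pose f2 := [ffun o : 'I_i => insubd d (nth 0 B o)].
have v1 o : val (f1 o) = nth 0 A o.
  by rewrite ffunE val_insubd bA // mem_nth // szA.
have v2 o : val (f2 o) = nth 0 B o.
  by rewrite ffunE val_insubd bB // mem_nth // szB.
have V1 : Vl f1 = A.
  rewrite /Vl (eq_map v1) (map_comp (nth 0 A) val) val_enum_ord -szA.
  exact: mkseq_nth.
have V2 : Vl f2 = B.
  rewrite /Vl (eq_map v2) (map_comp (nth 0 B) val) val_enum_ord -szB.
  exact: mkseq_nth.
have sA : sorted ltn A by apply: sorted_mask; [exact: ltn_trans | exact: iota_ltn_sorted].
have sB : sorted ltn B by apply: sorted_mask; [exact: ltn_trans | exact: iota_ltn_sorted].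
exists (f1, f2); split => //.
- rewrite /Sh1_pred /shuffle_pred /=; apply/andP; split; last by lia.
  apply/andP; split.
    apply/and3P; split.
    + apply/forallP => o1; apply/forallP => o2; apply/implyP => lt.
      rewrite v1 v1; apply: (sorted_ltn_nth ltn_trans) => //; rewrite inE szA //.
    + apply/forallP => o1; apply/forallP => o2; apply/implyP => lt.
      rewrite v2 v2; apply: (sorted_ltn_nth ltn_trans) => //; rewrite inE szB //.
    + apply/forallP => o1; apply/forallP => o2; apply/negP => /eqP /(congr1 val).
      rewrite v1 v2 => e.
      apply: (@mask_disj (iota 0 k) m (nth 0 B o2)); rewrite ?iota_uniq ?size_iota //.
        by apply: mem_nth; rewrite szB.
      by rewrite -e; apply: mem_nth; rewrite szA.
  apply/forallP => o; apply/implyP => /eqP o0; rewrite v1 o0.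
  by rewrite /A em.
rewrite V1 V2 /Gw -/k iota1S -!map_mask map_cat map_rev.
by [].
Qed.

Lemma PhiC_sub n l v : (1 <= l)%N -> v \in PhiC n.+1 l ->
  v \in [seq Wd n.+1 l n m | m <- vm n].
Proof.
move=> hl; rewrite mem_undup => /mapP [w hw ->].
move: hw; rewrite mem_undup => /flatten_mapP [i hi] /mapP [ab hab ->].
move: hab; rewrite mem_enum inE => hab.
have hi' : (i < n.+1)%N by move: hi; rewrite mem_iota; lia.
rewrite word_lemma //.
have [m hm [hc hg]] := @shuffle_to_mask n i ab hi' hab.
by apply/mapP; exists m => //; rewrite /Wd hc -hg.
Qed.

Lemma sub_PhiC n l m : (1 <= l)%N -> m \in vm n -> Wd n.+1 l n m \in PhiC n.+1 l.
Proof.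
move=> hl hm; have [ab [hi hsh hg]] := @mask_to_shuffle n m hm.
rewrite mem_undup; apply/mapP.
exists (perm_word (l + n.+1) (sigma_abpq l n.+1 (count id m) ab)).
  rewrite mem_undup; apply/flatten_mapP; exists (count id m); first by rewrite mem_iota; lia.
  by apply/mapP; exists ab => //; rewrite mem_enum.
by rewrite word_lemma // /Wd -hg.
Qed.

Lemma perm_PhiC n l : (1 <= l)%N -> perm_eq (PhiC n.+1 l) [seq Wd n.+1 l n m | m <- vm n].
Proof.
move=> hl; apply: uniq_perm; first exact: undup_uniq.
  rewrite map_inj_in_uniq ?uniq_vm //; exact: Wd_inj.
move=> v; apply/idP/idP; first exact: PhiC_sub.
by move/mapP => [m hm ->]; apply: sub_PhiC.
Qed.

Local Open Scope ring_scope.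

Lemma cf_beta p w : cf (nc_beta p) w = \sum_(cw <- p) cw.1 * cf (nc_lbr (map nc_x cw.2)) w.
Proof.
elim: p => [|a p IH]; first by rewrite big_nil /= cf_nil.
by rewrite big_cons /= cf_add cf_scale -IH.
Qed.

Lemma lbr_sw s w : (2 <= size s)%N ->
  cf (nc_lbr (map nc_x (sw s))) w = - cf (nc_lbr (map nc_x s)) w.
Proof.
case: s => [|a [|b r]] // _ /=.
rewrite (@cf_foldl_lin unit [:: tt] (fun _ => -1) (map nc_x r)
          (fun _ => nc_br (nc_x a) (nc_x b))) ?big_seq1 ?mulN1r // => w'.
by rewrite big_seq1 !cf_br; ring.
Qed.

Theorem corollary1 (k l : nat) (hk : (1 <= k)%N) (hl : (1 <= l)%N) :
  nc_eq
    (nc_br (nc_lbr [seq nc_x j | j <- iota k.+1 l])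
           (nc_lbr [seq nc_x j | j <- iota 1 k]))
    (nc_beta (Sum (PhiC k l))).
Proof.
case: k hk => [|n] // _ w.
rewrite claim cf_beta /Sum big_map /= undup_id ?undup_uniq //.
rewrite (perm_big _ (@perm_PhiC n l hl)) big_map /=.
rewrite big_seq_cond [RHS]big_seq_cond; apply: eq_bigr => m /andP [hm _].
rewrite mul1r /Wd /sgn -signr_odd.
have hsz := @size_vm n m hm.
have hG : (size (Gw n m) = n.+1)%N.
  rewrite /Gw size_cat size_rev !size_mask ?size_map ?size_iota // count_map.
  have h := count_predC id m.
  have h' : count (preim negb id) m = count (predC id) m by apply: eq_count.
  rewrite h'; lia.
case: l hl => [|l'] // _.
have Hc : forall G, nc_lbr (map nc_x (iota n.+2 l'.+1 ++ G)) =
   foldl nc_br (nc_lbr [seq nc_x j | j <- iota n.+2 l'.+1]) (map nc_x G).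
  by move=> G; rewrite /= map_cat foldl_cat.
case: (odd _); rewrite ?expr1 ?expr0.
  rewrite lbr_sw; last by rewrite size_cat size_iota hG; lia.
  by rewrite Hc mulN1r.
by rewrite Hc mul1r.
Qed.
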